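(* Let $\mathcal{A}$ be an additive category, $X$ an object of $\mathcal{A}$ with an action of a finite group $G$, and $H\subset G$ a subgroup such that the index $|G|/|H|$ is invertible in all Hom-groups of $\mathcal{A}$. Assume that the categorical quotients $X/L$ exist for all subgroups $L\subset G$. Then the fork diagram $$\partial_0,\partial_1:\bigoplus_{g\in G}X/(H\cap g^{-1}Hg)\rightrightarrows X/H\xrightarrow{e}X/G,$$ with $\partial_0=\bigoplus_{g}p_{H\cap g^{-1}Hg,H}$, $\partial_1=\bigoplus_gp_{H\cap g^{-1}Hg,H,g}$ and $e=p_{H,G}$, is a split fork diagram; in particular it is an absolute coequalizer diagram.
   Context: For $g\in G$, $[g]:X\to X$ denotes the corresponding automorphism, and for a subgroup $L$, $p_L:X\to X/L$ is the projection to the categorical quotient (the universal $L$-invariant morphism out of $X$). For subgroups $L,M\subset G$ and $g\in G$ with $gLg^{-1}\subset M$, $p_{L,M,g}:X/L\to X/M$ is the unique morphism with $p_{L,M,g}\circ p_L=p_M\circ[g]$; $p_{L,M}=p_{L,M,1}$. A fork $\partial_0,\partial_1:A\rightrightarrows B\xrightarrow{e}Z$ is split if $e\partial_0=e\partial_1$ and there exist $s:Z\to B$ and $t:B\to A$ with $es=\mathrm{Id}_Z$, $\partial_0t=\mathrm{Id}_B$, $\partial_1t=se$ (Mac Lane). *)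

(* Defs.v *)
From HB Require Import structures.
From mathcomp Require Import all_boot all_order all_algebra all_fingroup.
Set Implicit Arguments. Unset Strict Implicit. Unset Printing Implicit Defensive.
Import GRing.Theory.
Local Open Scope ring_scope.

Record AddCat := {
  Obj :> Type;
  Mor : Obj -> Obj -> zmodType;
  idm : forall A : Obj, Mor A A;
  comp : forall A B C : Obj, Mor B C -> Mor A B -> Mor A C;
  compA : forall A B C D (f : Mor C D) (g : Mor B C) (h : Mor A B),
      comp f (comp g h) = comp (comp f g) h;
  comp1m : forall A B (f : Mor A B), comp (idm B) f = f;
  compm1 : forall A B (f : Mor A B), comp f (idm A) = f;
  compDl : forall A B C (f f' : Mor B C) (g : Mor A B),
      comp (f + f') g = comp f g + comp f' g;
  compDr : forall A B C (f : Mor B C) (g g' : Mor A B),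
      comp f (g + g') = comp f g + comp f g';
  zobj : Obj;
  zobj_init : forall A (f : Mor zobj A), f = 0;
  zobj_term : forall A (f : Mor A zobj), f = 0;
  biprod2 : forall A B : Obj, exists (S : Obj) (i1 : Mor A S) (i2 : Mor B S)
      (p1 : Mor S A) (p2 : Mor S B),
      [/\ comp p1 i1 = idm A, comp p2 i2 = idm B, comp p1 i2 = 0,
          comp p2 i1 = 0 & comp i1 p1 + comp i2 p2 = idm S]
}.

Arguments Mor {a} : rename.
Arguments idm {a} _ : rename.
Arguments comp {a A B C} : rename.
Notation "f \oc g" := (comp f g) (at level 40, left associativity).

Section Defs.
Variables (C : AddCat) (gT : finGroupType).

Definition is_cat_action (X : C) (act : gT -> Mor X X) :=
  act 1%g = idm X /\ forall g h, act (g * h)%g = act g \oc act h.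

Definition cat_invariant (X Y : C) (act : gT -> Mor X X) (L : {set gT})
    (f : Mor X Y) := forall l, l \in L -> f \oc act l = f.

Definition is_cat_quotient (X Q : C) (act : gT -> Mor X X) (L : {set gT})
    (p : Mor X Q) :=
  cat_invariant act L p /\
  forall (Y : C) (f : Mor X Y), cat_invariant act L f ->
    exists! u : Mor Q Y, u \oc p = f.

Definition is_biproduct (I : finType) (F : I -> C) (S : C)
    (inj : forall i, Mor (F i) S) (pr : forall i, Mor S (F i)) :=
  [/\ forall i, pr i \oc inj i = idm (F i),
      forall i j, i != j -> pr j \oc inj i = 0
    & \sum_(i : I) (inj i \oc pr i) = idm S].
End Defs.

Definition split_fork (C : AddCat) (A B Z : C) (d0 d1 : Mor A B) (e : Mor B Z) :=
  e \oc d0 = e \oc d1 /\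
  exists (s : Mor Z B) (t : Mor B A),
    [/\ e \oc s = idm Z, d0 \oc t = idm B & d1 \oc t = s \oc e].

(* Main.v *)
Require Import Defs.
From HB Require Import structures.
From mathcomp Require Import all_boot all_order all_algebra all_fingroup.
Import GRing.Theory.
Local Open Scope ring_scope.

Section CatLemmas.
Variable C : AddCat.

Lemma comp0m (A B D : C) (g : Mor A B) : (0 : Mor B D) \oc g = 0.
Proof.
have h := compDl (0 : Mor B D) 0 g; rewrite addr0 in h.
by apply: (addrI (0 \oc g)); rewrite addr0 -h.
Qed.

Lemma compm0 (A B D : C) (f : Mor B D) : f \oc (0 : Mor A B) = 0.
Proof.
have h := compDr f (0 : Mor A B) 0; rewrite addr0 in h.
by apply: (addrI (f \oc 0)); rewrite addr0 -h.
Qed.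

Lemma comp_suml (A B D : C) (I : Type) (r : seq I) (P : pred I)
  (F : I -> Mor B D) (g : Mor A B) :
  (\sum_(i <- r | P i) F i) \oc g = \sum_(i <- r | P i) (F i \oc g).
Proof.
by elim/big_rec2: _ => [|i x y _ <-]; rewrite ?comp0m ?compDl.
Qed.

Lemma comp_sumr (A B D : C) (I : Type) (r : seq I) (P : pred I)
  (F : I -> Mor A B) (f : Mor B D) :
  f \oc (\sum_(i <- r | P i) F i) = \sum_(i <- r | P i) (f \oc F i).
Proof.
by elim/big_rec2: _ => [|i x y _ <-]; rewrite ?compm0 ?compDr.
Qed.

Lemma compMnl (A B D : C) (f : Mor B D) (g : Mor A B) k :
  (f *+ k) \oc g = (f \oc g) *+ k.
Proof. by elim: k => [|k IH]; rewrite ?mulr0n ?comp0m // !mulrS compDl IH. Qed.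

Lemma compMnr (A B D : C) (f : Mor B D) (g : Mor A B) k :
  f \oc (g *+ k) = (f \oc g) *+ k.
Proof. by elim: k => [|k IH]; rewrite ?mulr0n ?compm0 // !mulrS compDr IH. Qed.

Lemma quot_epi (gT : finGroupType) (X Q Y : C) (act : gT -> Mor X X)
  (L : {set gT}) (p : Mor X Q) (u v : Mor Q Y) :
  is_cat_quotient act L p -> u \oc p = v \oc p -> u = v.
Proof.
case=> inv univ E.
have inv' : cat_invariant act L (v \oc p).
  by move=> l hl; rewrite -Defs.compA (inv l hl).
case: (univ _ _ inv') => w [_ uniq].
by rewrite -(uniq u E) (uniq v erefl).
Qed.
End CatLemmas.
Arguments quot_epi {C gT X Q Y act L p u v}.

Section GrpLemmas.
Variable gT : finGroupType.
Implicit Types (L K H : {group gT}).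
Local Open Scope group_scope.

Lemma reprA (V : Type) L (F : gT -> V) y :
  (forall l x, l \in L -> F (l * x)%g = F x) -> F (repr (L :* y)) = F y.
Proof. by move=> hF; case/rcosetP: (mem_repr _ (rcoset_refl L y)) => l hl ->; apply: hF. Qed.

Lemma rcosets_repr L K c : c \in rcosets L K -> c = L :* repr c.
Proof. by case/rcosetsP => x _ ->; apply/esym/rcoset_eqP; apply: mem_repr _ (rcoset_refl L x). Qed.

Lemma repr_rcosets_in L K c : L \subset K -> c \in rcosets L K -> repr c \in K.
Proof.
move=> sLK /rcosetsP[x xK ->].
by case/rcosetP: (mem_repr _ (rcoset_refl L x)) => l lL ->; rewrite groupM // (subsetP sLK).
Qed.

Lemma sum_rcosets_shift (V : zmodType) L K (F : gT -> V) k :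
  (forall l x, l \in L -> F (l * x)%g = F x) -> k \in K ->
  \sum_(c in rcosets L K) F (repr c * k)%g = \sum_(c in rcosets L K) F (repr c).
Proof.
move=> hF kK; rewrite [RHS](reindex_acts 'Rs (actsRs_rcosets L K) kK).
apply: eq_bigr => c hc /=.
by rewrite {2}(rcosets_repr _ _ _ hc) rcosetE -rcosetM reprA.
Qed.

Definition dcos (H : {set gT}) y := (H :* y * H)%g.

Lemma dcosP H y z : reflect (exists h1, exists h2, [/\ h1 \in H, h2 \in H & z = h1 * y * h2]%g)
  (z \in dcos H y).
Proof.
apply: (iffP mulsgP).
  by case=> a b /rcosetP[h1 h1H ->] h2H ->; exists h1, b.
case=> h1 [h2 [h1H h2H ->]]; exists (h1 * y)%g h2 => //.
by apply/rcosetP; exists h1.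
Qed.

Lemma dcos_refl H y : y \in dcos H y.
Proof. by apply/dcosP; exists 1%g, 1%g; rewrite mulg1 mul1g !group1. Qed.

Lemma dcos_eq H y z : z \in dcos H y -> dcos H z = dcos H y.
Proof.
case/dcosP=> h1 [h2 [h1H h2H ->]]; apply/setP=> w; apply/dcosP/dcosP.
  case=> a [b [aH bH ->]]; exists (a * h1)%g, (h2 * b)%g; split; rewrite ?groupM //.
  by rewrite !mulgA.
case=> a [b [aH bH ->]]; exists (a * h1^-1)%g, (h2^-1 * b)%g; split; rewrite ?groupM ?groupV //.
by rewrite !mulgA mulgK mulgKV.
Qed.

Definition rho (H : {set gT}) y := repr (dcos H y).

Lemma rho_in H y : rho H y \in dcos H y.
Proof. exact: mem_repr _ (dcos_refl H y). Qed.

Lemma dcos_rho H y : dcos H (rho H y) = dcos H y.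
Proof. exact: dcos_eq (rho_in H y). Qed.


Lemma double_sum (V : zmodType) H (F : gT -> V) :
  (forall h x, h \in H -> F (h * x) = F x) ->
  \sum_(g in rho H @: [set: gT]) \sum_(c in rcosets (H :&: H :^ g) H) F (g * repr c)%g
  = \sum_(c in rcosets H [set: gT]) F (repr c).
Proof.
move=> hF.
set I := rho H @: [set: gT].
pose P := [set u : gT * {set gT} | (u.1 \in I) && (u.2 \in rcosets (H :&: H :^ u.1) H)].
pose Phi (u : gT * {set gT}) := H :* (u.1 * repr u.2).
have memP g c : (g, c) \in P -> [/\ exists y, g = rho H y,
    c = (H :&: H :^ g)%G :* repr c & repr c \in H].
  rewrite inE /= => /andP[/imsetP[y _ ->] hc]; split; first by exists y.
    exact: (rcosets_repr (H :&: H :^ _)%G H _ hc).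
  exact: (@repr_rcosets_in (H :&: H :^ _)%G H _ (subsetIl _ _) hc).
have Phi_inj : {in P &, injective Phi}.
  move=> [g c] [g' c'] /memP[[y gy] cE cH] /memP[[y' gy'] c'E c'H].
  rewrite /Phi /= => E.
  have gg' : g = g'.
    have : g * repr c \in H :* (g' * repr c') by rewrite -E rcoset_refl.
    case/rcosetP => h hH ghc.
    have : g \in dcos H g'.
      apply/dcosP; exists h, (repr c' * (repr c)^-1); split; rewrite ?groupM ?groupV //.
      by rewrite !mulgA -(mulgA h) -ghc mulgK.
    move/dcos_eq => D; rewrite gy gy' !dcos_rho in D.
    by rewrite gy gy' /rho D.
  rewrite -gg' in c'E E *; congr (_, _).
  rewrite cE c'E; apply/rcoset_eqP; rewrite mem_rcoset.
  have : g * repr c \in H :* (g * repr c') by rewrite -E rcoset_refl.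
  case/rcosetP => h hH e2.
  rewrite inE groupM ?groupV //=.
  by rewrite mem_conjg conjgE invgK !mulgA e2 !mulgA mulgK mulgK.
have Phi_img : Phi @: P = rcosets H [set: gT].
  apply/setP => c'; apply/imsetP/rcosetsP.
    by case=> [[g c]] _ ->; exists (g * repr c); rewrite ?inE.
  case=> y _ ->.
  pose g := rho H y.
  have : y \in dcos H g by rewrite dcos_rho dcos_refl.
  case/dcosP => h1 [h2 [h1H h2H yE]].
  exists (g, (H :&: H :^ g) :* h2).
    rewrite inE /=; apply/andP; split; first by apply/imsetP; exists y; rewrite ?inE.
    by apply/rcosetsP; exists h2.
  rewrite /Phi /=.
  case/rcosetP: (mem_repr _ (rcoset_refl (H :&: H :^ g)%G h2)) => l lL ->.
  case/setIP: lL => lH lHg.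
  have kH : l ^ g^-1 \in H by rewrite -mem_conjg.
  have -> : g * (l * h2) = (l ^ g^-1) * (g * h2).
    by rewrite conjgE invgK !mulgA mulgKV.
  by rewrite yE -mulgA rcosetM (rcoset_id h1H) [in RHS]rcosetM (rcoset_id kH).
rewrite pair_big_dep /=.
rewrite (eq_bigl (fun u => u \in P)); last by move=> u; rewrite inE.
rewrite -Phi_img big_imset //=.
by apply: eq_bigr => u _; rewrite /Phi reprA.
Qed.

End GrpLemmas.

Theorem mainTheorem13 (C : AddCat) (gT : finGroupType) (X : C)
    (act : gT -> Mor X X) (H : {group gT})
    (Q : {group gT} -> C) (p : forall L : {group gT}, Mor X (Q L))
    (S : C)
    (inj : forall g : gT, Mor (Q (H :&: H :^ g)%G) S)
    (pr : forall g : gT, Mor S (Q (H :&: H :^ g)%G))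
    (d0 d1 : Mor S (Q H)) (e : Mor (Q H) (Q [set: gT]%G)) :
  is_cat_action act ->
  (forall A B : C, bijective (fun f : Mor A B => f *+ #|[set: gT] : H|%g)) ->
  (forall L : {group gT}, is_cat_quotient act L (p L)) ->
  is_biproduct inj pr ->
  (forall g : gT, (d0 \oc inj g) \oc p (H :&: H :^ g)%G = p H) ->
  (forall g : gT, (d1 \oc inj g) \oc p (H :&: H :^ g)%G = p H \oc act g) ->
  e \oc p H = p [set: gT]%G ->
  split_fork d0 d1 e.
Proof.
move=> [act1 actM] hn hq [bp1 bp0 bpS] hd0 hd1 he.
set n := #|[set: gT] : H|%g.
have canN (A B : C) (u v : Mor A B) : u *+ n = v *+ n -> u = v.
  by case: (hn A B) => k k1 _ /(congr1 k); rewrite !k1.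
have surN (A B : C) (w : Mor A B) : exists u, u *+ n = w.
  by case: (hn A B) => k _ k2; exists (k w); exact: k2.
have pinv (L : {group gT}) l : l \in L -> p L \oc act l = p L.
  by move=> hl; apply: (hq L).1.
have hFH (Y : C) (u : Mor X Y) (L : {group gT}) : (forall l, l \in L -> u \oc act l = u) ->
    forall l x, l \in L -> u \oc act (l * x)%g = u \oc act x.
  by move=> hu l x hl; rewrite actM Defs.compA hu.
have nE : n = #|rcosets H [set: gT]| by [].
pose T := \sum_(c in rcosets H [set: gT]) p H \oc act (repr c).
have Tinv : cat_invariant act [set: gT]%G T.
  move=> l _; rewrite /T comp_suml.
  rewrite -(@sum_rcosets_shift _ _ H [set: gT]%G
     (fun x => p H \oc act x) l); last by rewrite inE.
    by apply: eq_bigr => c _; rewrite -Defs.compA -actM.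
  exact: hFH (pinv H).
case: ((hq [set: gT]%G).2 _ T Tinv) => s0 [hs0 _].
case: (surN _ _ s0) => s hs.
pose I := rho _ H @: [set: gT].
pose F0 := \sum_(g in I) \sum_(c in rcosets (H :&: H :^ g)%g H)
             inj g \oc (p (H :&: H :^ g)%G \oc act (repr c)).
have F0inv : cat_invariant act H F0.
  move=> h hH; rewrite /F0 comp_suml; apply: eq_bigr => g _.
  rewrite comp_suml.
  rewrite -(@sum_rcosets_shift _ _ (H :&: H :^ g)%G H
     (fun x => inj g \oc (p (H :&: H :^ g)%G \oc act x)) h) //.
    by apply: eq_bigr => c _; rewrite -!Defs.compA -actM.
  move=> l x hl /=; congr (_ \oc _); exact: hFH (pinv _) l x hl.
case: ((hq H).2 _ F0 F0inv) => t0 [ht0 _].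
case: (surN _ _ t0) => t ht.
split.
  rewrite -(compm1 d0) -(compm1 d1) -bpS !comp_sumr.
  apply: eq_bigr => g _.
  rewrite !Defs.compA; congr (_ \oc pr g).
  apply: (quot_epi (hq (H :&: H :^ g)%G)).
  rewrite -!Defs.compA [d0 \oc _]Defs.compA hd0 [d1 \oc _]Defs.compA hd1.
  by rewrite Defs.compA he pinv // inE.
exists s, t; split.
- apply: canN; apply: (quot_epi (hq [set: gT]%G)).
  rewrite !compMnl comp1m -Defs.compA -compMnr -compMnl hs hs0.
  rewrite /T comp_sumr.
  rewrite (eq_bigr (fun _ => p [set: gT]%G)); last first.
    by move=> c _; rewrite Defs.compA he pinv // inE.
  by rewrite sumr_const.
- apply: canN; apply: (quot_epi (hq H)).
  rewrite !compMnl comp1m -Defs.compA -compMnr -compMnl ht ht0.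
  rewrite /F0 comp_sumr.
  rewrite (eq_bigr (fun g => \sum_(c in rcosets (H :&: H :^ g)%g H)
       (fun _ : gT => p H) (g * repr c)%g)); last first.
    move=> g _; rewrite comp_sumr; apply: eq_bigr => c hc.
    rewrite !Defs.compA hd0 pinv //.
    exact: (@repr_rcosets_in _ (H :&: H :^ g)%G H c (subsetIl _ _) hc).
  by rewrite (@double_sum _ _ H (fun _ => p H)) // sumr_const.
- apply: canN; apply: (quot_epi (hq H)).
  transitivity T.
    rewrite compMnl -Defs.compA -compMnr -compMnl ht ht0 /F0 comp_sumr.
    rewrite (eq_bigr (fun g => \sum_(c in rcosets (H :&: H :^ g)%g H)
         (fun x => p H \oc act x) (g * repr c)%g)); last first.
      move=> g _; rewrite comp_sumr; apply: eq_bigr => c hc.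
      by rewrite !Defs.compA hd1 -Defs.compA -actM.
    rewrite (@double_sum _ _ H (fun x => p H \oc act x)) //.
    exact: hFH (pinv H).
  by rewrite compMnl -Defs.compA he -compMnl hs hs0.
Qed.
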